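(* Let $0<r_j\le\infty$ and $0<s_j\le\infty$ for $j=1,\dots,n$, and let $\gamma(\mathbf{r})=\otimes_{j=1}^n\gamma(r_j)$ and $\gamma(\mathbf{s})=\otimes_{j=1}^n\gamma(s_j)$ be thermal states with $\operatorname{supp}\gamma(\mathbf{r})\subseteq\operatorname{supp}\gamma(\mathbf{s})$. Let $\mathcal{F}_{\mathbf{r}}=\{j\in\{1,\dots,n\}: r_j<\infty\}$, $\mathcal{F}_{\mathbf{s}}=\{j: s_j<\infty\}$, and $\mathcal{F}_{\mathbf{r}<\mathbf{s}}=\{j\in\mathcal{F}_{\mathbf{r}}\cap\mathcal{F}_{\mathbf{s}}: r_j<s_j\}$. Then: (1) If $\mathcal{F}_{\mathbf{r}<\mathbf{s}}=\emptyset$ (i.e. $r_j\ge s_j$ for all $j\in\mathcal{F}_{\mathbf{r}}\cap\mathcal{F}_{\mathbf{s}}$), then $D_\alpha(\gamma(\mathbf{r})\|\gamma(\mathbf{s}))<\infty$ for every $\alpha\in(0,1)\cup(1,\infty)$. (2) If $\mathcal{F}_{\mathbf{r}<\mathbf{s}}\neq\emptyset$, then for $\alpha\in(0,1)\cup(1,\infty)$, $$D_\alpha(\gamma(\mathbf{r})\|\gamma(\mathbf{s}))<\infty\iff \alpha<\min_{j\in\mathcal{F}_{\mathbf{r}<\mathbf{s}}}\frac{s_j}{s_j-r_j}.$$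
   Context: One-mode Fock space: $\ell^2(\mathbb{Z}_{\ge 0})$ with orthonormal particle basis $\{|k\rangle\}_{k\ge0}$; the $n$-mode space is the $n$-fold tensor product with basis $|\mathbf{k}\rangle=|k_1\rangle\otimes\cdots\otimes|k_n\rangle$. For $0<s<\infty$ the one-mode thermal state is $\gamma(s)=(1-e^{-s})\sum_{k\ge0}e^{-ks}|k\rangle\langle k|$, and $\gamma(\infty)=|0\rangle\langle0|$. $\operatorname{supp}$ denotes the support (orthogonal complement of the kernel). For states $\rho=\sum_i p_i|x_i\rangle\langle x_i|$, $\sigma=\sum_j q_j|y_j\rangle\langle y_j|$ (spectral decompositions with orthonormal bases), the Petz–Rényi $\alpha$-relative entropy for $\alpha\in(0,1)\cup(1,\infty)$ is $D_\alpha(\rho\|\sigma)=\frac{1}{\alpha-1}\log\sum_{i,j}p_i^\alpha q_j^{1-\alpha}|\langle x_i|y_j\rangle|^2$, with the conventions (for $\alpha>1$) $0^{1-\alpha}=\infty$ and $0\cdot\infty=0$. *)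

(* Defs.v *)
From HB Require Import structures.
From mathcomp Require Import all_boot all_order all_algebra.
From mathcomp Require Import all_classical all_reals all_analysis.
Set Implicit Arguments. Unset Strict Implicit. Unset Printing Implicit Defensive.
Import Order.TTheory GRing.Theory Num.Theory.
Local Open Scope ring_scope.
Local Open Scope classical_set_scope.

Section Defs.
Variable R : realType.

Definition elog (x : \bar R) : \bar R :=
  match x with
  | r%:E => if 0 < r then (ln r)%:E else -oo%E
  | +oo%E => +oo%E
  | -oo%E => -oo%E
  end.

Definition qpow (alpha q : R) : \bar R :=
  if 0 < q then (q `^ (1 - alpha))%:E
  else if 1 < alpha then +oo%E else 0%E.

(* Petz--Renyi alpha-relative entropy of rho = sum_i p_i |x_i><x_i| and
   sigma = sum_j q_j |y_j><y_j| (spectral decompositions in orthonormal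
   bases {x_i}_{i:I}, {y_j}_{j:J}), where W i j = |<x_i|y_j>|^2 :
   D_alpha = 1/(alpha-1) log sum_{i,j} p_i^alpha q_j^(1-alpha) |<x_i|y_j>|^2,
   with 0^(1-alpha) = oo (alpha > 1) and 0 * oo = 0. *)
Definition petz_renyi {I J : choiceType} (alpha : R)
    (p : I -> R) (q : J -> R) (W : I -> J -> R) : \bar R :=
  let term (ij : I * J) : \bar R :=
    if (p ij.1 == 0) || (W ij.1 ij.2 == 0) then 0%E
    else ((p ij.1 `^ alpha)%:E * (W ij.1 ij.2)%:E * qpow alpha (q ij.2))%E in
  ((alpha - 1)^-1)%:E * elog (esum [set: I * J] term).

(* Particle-number basis of the n-mode Fock space: |k> = |k_1> (x) ... (x) |k_n>. *)
Definition fock_index (n : nat) := {ffun 'I_n -> nat}.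

(* |<k|k'>|^2 for the orthonormal particle basis. *)
Definition fock_overlap (n : nat) (k k' : fock_index n) : R :=
  if k == k' then 1 else 0.

(* Eigenvalue of the one-mode thermal state gamma(s) on |k>, s in (0, +oo]:
   gamma(s) = (1 - e^{-s}) sum_k e^{-ks} |k><k|,  gamma(+oo) = |0><0|. *)
Definition thermal_ev (s : \bar R) (k : nat) : R :=
  match s with
  | x%:E => (1 - expR (- x)) * expR (- (k%:R * x))
  | +oo%E => if k == 0%N then 1 else 0
  | -oo%E => 0
  end.

Definition thermal (n : nat) (s : 'I_n -> \bar R) (k : fock_index n) : R :=
  \prod_(j < n) thermal_ev (s j) (k j).

(* Support of a state diagonal in the Fock basis, recorded by the set of
   basis vectors |k> with nonzero eigenvalue (supp = their closed span). *)
Definition diag_supp (n : nat) (p : fock_index n -> R) : set (fock_index n) :=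
  [set k | p k != 0].

Definition D_thermal (n : nat) (alpha : R) (r s : 'I_n -> \bar R) : \bar R :=
  petz_renyi alpha (thermal r) (thermal s) (@fock_overlap n).

Definition Ffin (n : nat) (s : 'I_n -> \bar R) : {set 'I_n} :=
  [set j | (s j < +oo)%E].

Definition Flt (n : nat) (r s : 'I_n -> \bar R) : {set 'I_n} :=
  [set j in Ffin r :&: Ffin s | (r j < s j)%E].

End Defs.

(* Main.v *)
Require Import Defs.
From HB Require Import structures.
From mathcomp Require Import all_boot all_order all_algebra.
From mathcomp Require Import all_classical all_reals all_analysis.
From mathcomp Require Import ring lra.
From mathcomp Require finmap.
Import Order.TTheory GRing.Theory Num.Theory.
Local Open Scope ring_scope.
Local Open Scope classical_set_scope.
Set Implicit Arguments. Unset Strict Implicit. Unset Printing Implicit Defensive.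

Section Aux.
Variable R : realType.

Lemma ev_ge0 (x : \bar R) m : (0 < x)%E -> 0 <= thermal_ev x m.
Proof.
case: x => [a| |] //=; rewrite ?lte_fin => a0.
  by rewrite mulr_ge0 ?expR_ge0 // subr_ge0 ltW // expR_lt1 oppr_lt0.
by case: eqP.
Qed.

Lemma ev0_gt0 (x : \bar R) : (0 < x)%E -> 0 < thermal_ev x 0.
Proof.
case: x => [a| |] //=; rewrite ?lte_fin => a0.
by rewrite mulr_gt0 ?expR_gt0 // subr_gt0 expR_lt1 oppr_lt0.
Qed.

Lemma powR_prod (I : Type) (rr : seq I) (P : pred I) (F : I -> R) c :
  (forall i, P i -> 0 <= F i) ->
  (\prod_(i <- rr | P i) F i) `^ c = \prod_(i <- rr | P i) F i `^ c.
Proof.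
move=> F0; elim: rr => [|i rr IH]; first by rewrite !big_nil powR1.
rewrite !big_cons; case: ifP => Pi //.
by rewrite powRM ?F0 ?IH // prodr_ge0.
Qed.

Definition hm (alpha : R) (a b : \bar R) (m : nat) : R :=
  thermal_ev a m `^ alpha * thermal_ev b m `^ (1 - alpha).

Lemma hm_ge0 alpha a b m : 0 <= hm alpha a b m.
Proof. by rewrite mulr_ge0 ?powR_ge0. Qed.

Lemma hm0_gt0 alpha a b : (0 < a)%E -> (0 < b)%E -> 0 < hm alpha a b 0.
Proof. by move=> a0 b0; rewrite mulr_gt0 ?powR_gt0 ?ev0_gt0. Qed.

Lemma subexp_ge0 (z : R) : 0 < z -> 0 <= 1 - expR (- z).
Proof. by move=> z0; rewrite subr_ge0 ltW // expR_lt1 oppr_lt0. Qed.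

Lemma hm_FF alpha x y m : 0 < x -> 0 < y ->
  hm alpha x%:E y%:E m =
  hm alpha x%:E y%:E 0 * expR (- (alpha * x + (1 - alpha) * y)) ^+ m.
Proof.
move=> x0 y0.
rewrite /hm /= !powRM ?expR_ge0 ?subexp_ge0 // -!expRM !mulr0n !mul0r !oppr0
  !mul0r !expR0 !mulr1 -expRM_natl.
have E : expR (- (m%:R * x) * alpha) * expR (- (m%:R * y) * (1 - alpha)) =
   expR (m%:R * - (alpha * x + (1 - alpha) * y)).
  by rewrite -expRD; congr expR; ring.
rewrite -E; ring.
Qed.

Lemma mode_good alpha (a b : \bar R) : 0 < alpha -> alpha != 1 ->
  (0 < a)%E -> (0 < b)%E ->
  (forall x y, a = x%:E -> b = y%:E -> 0 < alpha * x + (1 - alpha) * y) ->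
  exists B, forall N, \sum_(m < N) hm alpha a b m <= B.
Proof.
move=> al0 al1 a0 b0 good.
suff [x [x0 x1 hx]] : exists x, [/\ 0 <= x, x < 1 &
    forall m, hm alpha a b m <= hm alpha a b 0 * x ^+ m].
  exists (hm alpha a b 0 / (1 - x)) => N.
  apply: (@le_trans _ _ (\sum_(m < N) hm alpha a b 0 * x ^+ m)).
    by apply: ler_sum => m _; apply: hx.
  rewrite -mulr_sumr ler_wpM2l ?hm_ge0 //.
  have x1' : 0 < 1 - x by rewrite subr_gt0.
  rewrite -[X in _ <= X]mul1r ler_pdivlMr //.
  have E : (\sum_(i < N) x ^+ i) * (1 - x) = 1 - x ^+ N.
    have := subrX1 x N; move=> H.
    by rewrite -[RHS]opprB H; ring.
  by rewrite E lerBlDr lerDl exprn_ge0.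
case: a a0 good => [x| |] //; case: b b0 => [y| |] //; rewrite ?lte_fin.
- move=> y0 x0 good.
  exists (expR (- (alpha * x + (1 - alpha) * y))); split.
  + exact: expR_ge0.
  + by rewrite expR_lt1 oppr_lt0 good.
  + by move=> m; rewrite hm_FF.
- move=> _ x0 _; exists 0; split => // -[|m]; first by rewrite expr0 mulr1.
  rewrite expr0n mulr0 /hm /= powR0 ?mulr0 //.
  by rewrite subr_eq0 eq_sym.
- move=> _ _ _; exists 0; split => // -[|m]; first by rewrite expr0 mulr1.
  by rewrite expr0n mulr0 /hm /= powR0 ?mul0r // gt_eqF.
- move=> _ _ _; exists 0; split => // -[|m]; first by rewrite expr0 mulr1.
  by rewrite expr0n mulr0 /hm /= powR0 ?mul0r // gt_eqF.
Qed.

Lemma mode_bad alpha x y : 0 < x -> 0 < y ->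
  alpha * x + (1 - alpha) * y <= 0 ->
  forall m, hm alpha x%:E y%:E 0 <= hm alpha x%:E y%:E m.
Proof.
move=> x0 y0 bad m; rewrite [X in _ <= X]hm_FF // ler_peMr ?hm_ge0 //.
by rewrite exprn_ege1 // leNgt expR_lt1 -leNgt oppr_ge0.
Qed.

Lemma seq_bound n (f : 'I_n -> nat -> R) (Bd : 'I_n -> R) :
  (forall j m, 0 <= f j m) -> (forall j N, \sum_(m < N) f j m <= Bd j) ->
  forall s : seq (fock_index n), uniq s ->
  \sum_(k <- s) \prod_(j < n) f j (k j) <= \prod_(j < n) Bd j.
Proof.
move=> f0 fB s us.
set N := \max_(k <- s) \max_(j < n) k j.
have kN : forall k, k \in s -> forall j, (k j < N.+1)%N.
  move=> k ks j; rewrite ltnS.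
  apply: (leq_trans _ (leq_bigmax_seq (F := fun k : fock_index n => \max_(j < n) k j) k ks isT)).
  exact: (leq_bigmax j).
pose emb (phi : {ffun 'I_n -> 'I_N.+1}) : fock_index n := [ffun j => nat_of_ord (phi j)].
pose proj (k : fock_index n) : {ffun 'I_n -> 'I_N.+1} := [ffun j => inord (k j)].
have ep : {in s, forall k, emb (proj k) = k}.
  move=> k ks; apply/ffunP => j; rewrite !ffunE inordK //; exact: kN.
rewrite (eq_big_seq (fun k => \prod_(j < n) f j (emb (proj k) j))); last first.
  by move=> k ks; rewrite ep.
rewrite -(big_map proj predT (fun phi => \prod_(j < n) f j (emb phi j))).
have um : uniq (map proj s).
  by rewrite map_inj_in_uniq // => x y xs ys /(congr1 emb); rewrite !ep.
apply: (@le_trans _ _ (\sum_(phi : {ffun 'I_n -> 'I_N.+1}) \prod_(j < n) f j (emb phi j))).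
  rewrite big_uniq //= [X in _ <= X](bigID (mem (map proj s))) /= lerDl.
  by rewrite sumr_ge0 // => i _; exact: prodr_ge0.
under eq_bigr do under eq_bigr do rewrite ffunE.
rewrite -(bigA_distr_bigA (fun j (i : 'I_N.+1) => f j i)).
apply: ler_prod => j _; rewrite sumr_ge0 //=; exact: fB.
Qed.

End Aux.

Section Main.
Variables (R : realType) (n : nat) (r s : 'I_n -> \bar R).
Hypotheses (hr : forall j, (0 < r j)%E) (hs : forall j, (0 < s j)%E)
  (hsupp : diag_supp (thermal r) `<=` diag_supp (thermal s)).
Variable alpha : R.
Hypotheses (al0 : 0 < alpha) (al1 : alpha != 1).

Local Definition g (k : fock_index n) : R :=
  \prod_(j < n) hm alpha (r j) (s j) (k j).

Lemma g_ge0 k : 0 <= g k.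
Proof. by apply: prodr_ge0 => j _; exact: hm_ge0. Qed.

Lemma gE k : g k = thermal r k `^ alpha * thermal s k `^ (1 - alpha).
Proof.
rewrite /g /hm big_split /thermal !powR_prod // => j _; exact: ev_ge0.
Qed.

Local Definition S := \esum_(k in [set: fock_index n]) (g k)%:E.

Lemma D_eq : D_thermal alpha r s = (((alpha - 1)^-1)%:E * elog S)%E.
Proof.
rewrite /D_thermal /petz_renyi /S; congr (_ * elog _)%E.
rewrite (_ : \esum_(k in setT) (g k)%:E =
   \esum_(ij in (fun k => (k, k)) @` setT) (g ij.1)%:E); last first.
  by rewrite esum_image // => x y _ _ [].
rewrite [RHS]esum_mkcond; apply: eq_esum => -[k k'] _ /=.
case: (eqVneq k k') => [<-|ne].
  rewrite [X in _ = X]ifT; last by apply/mem_set; exists k.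
  rewrite /fock_overlap eqxx oner_eq0 orbF.
  case: ifPn => [/eqP p0|p0]; first by rewrite gE p0 powR0 ?mul0r // gt_eqF.
  have q0 : thermal s k != 0 := hsupp p0.
  have qpos : 0 < thermal s k.
    by rewrite lt_def q0 prodr_ge0 // => j _; exact: ev_ge0.
  by rewrite /qpow qpos gE mule1 EFinM.
case: (ifPn (_ \in _)) => [/set_mem [x _ [e1 e2]]|_].
  by move: ne; rewrite -e1 -e2 eqxx.
by rewrite /fock_overlap (negbTE ne) eqxx orbT.
Qed.

Lemma S_ge k : ((g k)%:E <= S)%E.
Proof.
apply: esum_ge; exists [set k]; first by split => //; exact: finite_set1.
by rewrite fsbig_set1.
Qed.

Definition good := forall j x y, r j = x%:E -> s j = y%:E ->
  0 < alpha * x + (1 - alpha) * y.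

Lemma S_fin : good -> exists B, (S <= B%:E)%E.
Proof.
move=> gd.
have : forall j, exists B, forall N, \sum_(m < N) hm alpha (r j) (s j) m <= B.
  by move=> j; apply: mode_good => //; exact: gd.
move/choice => [Bd hB]; exists (\prod_(j < n) Bd j).
rewrite /S /esum ge_ereal_sup //= => _ [X [finX _]] <-.
rewrite fsbig_finite // sumEFin lee_fin /g.
apply: (seq_bound (f := fun j => hm alpha (r j) (s j))) => //.
  by move=> j m; exact: hm_ge0.
exact: finmap.fset_uniq.
Qed.

Local Definition k0 : fock_index n := [ffun => 0%N].

Lemma g0_gt0 : 0 < g k0.
Proof. by rewrite /g prodr_gt0 // => i _; rewrite ffunE hm0_gt0. Qed.

Lemma S_inf j x y : r j = x%:E -> s j = y%:E ->
  alpha * x + (1 - alpha) * y <= 0 -> S = +oo%E.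
Proof.
move=> rj sj bad.
have x0 : 0 < x by have := hr j; rewrite rj lte_fin.
have y0 : 0 < y by have := hs j; rewrite sj lte_fin.
pose kk (m : nat) : fock_index n := [ffun i => if i == j then m else 0%N].
have gk : forall m, g k0 <= g (kk m).
  move=> m; rewrite /g; apply: ler_prod => i _; rewrite hm_ge0 /= !ffunE.
  case: eqP => [->|_]; last by [].
  by rewrite rj sj; exact: mode_bad.
have g0 := g0_gt0.
have kinj : injective kk.
  move=> a b H; have := congr1 (fun f : fock_index n => f j) H.
  by rewrite /= !ffunE eqxx.
apply: eq_infty => z.
have sub : (\esum_(k in range kk) (g k)%:E <= S)%E.
  rewrite /S [X in (X <= _)%E]esum_mkcond; apply: le_esum => k _.
  by case: ifPn => // _; rewrite lee_fin g_ge0.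
rewrite esum_set_image in sub; last 2 first.
- by move=> m _; rewrite lee_fin g_ge0.
- by move=> a b _ _; exact: kinj.
apply: le_trans sub.
set M := Num.bound (`|z| / g k0).
apply: (le_trans _ (nneseries_lim_ge M _)); last first.
  by move=> m _ _; rewrite lee_fin g_ge0.
rewrite sumEFin lee_fin.
have H1 : \sum_(0 <= i < M | i \in [set: nat]) g k0 <=
          \sum_(0 <= i < M | i \in [set: nat]) g (kk i).
  by apply: ler_sum => i _; exact: gk.
apply: le_trans H1.
rewrite (eq_bigl xpredT); last by move=> i; rewrite in_setT.
rewrite sumr_const_nat subn0 -mulr_natl.
have hb := archi_boundP (divr_ge0 (normr_ge0 z) (ltW g0)).
have : `|z| / g k0 * g k0 <= M%:R * g k0 by rewrite ler_pM2r // ltW.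
rewrite divfK ?gt_eqF // => H.
exact: le_trans (ler_norm z) H.
Qed.

Lemma good_lt1 : alpha < 1 -> good.
Proof.
move=> a1 j x y rj sj.
have x0 : 0 < x by have := hr j; rewrite rj lte_fin.
have y0 : 0 < y by have := hs j; rewrite sj lte_fin.
by rewrite addr_gt0 // mulr_gt0 // subr_gt0.
Qed.

Lemma D_lt_iff : (D_thermal alpha r s < +oo)%E <-> good.
Proof.
rewrite D_eq; split.
  move=> H; apply: contrapT => ng.
  move/existsNP: ng => [j /existsNP [x /existsNP [y /not_implyP [rj /not_implyP [sj /negP]]]]].
  rewrite -leNgt => bad.
  case: (ltgtP alpha 1) => [lt1|gt1|eq1]; last by move: al1; rewrite eq1 eqxx.
    by move: (good_lt1 lt1 rj sj); rewrite ltNge bad.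
  move: H; rewrite (S_inf rj sj bad) /= gt0_muley ?ltxx // lte_fin invr_gt0 subr_gt0.
  done.
move=> gd; have [B SB] := S_fin gd.
have Sge := S_ge k0; have g0 := g0_gt0.
have Sfin : S \is a fin_num.
  by rewrite fin_numElt (lt_le_trans (ltNyr _) Sge) (le_lt_trans SB (ltry _)).
have fpos : 0 < fine S by rewrite (lt_le_trans g0) // -lee_fin fineK.
by rewrite -(fineK Sfin) /= fpos -EFinM ltry.
Qed.

Lemma good_Flt : 1 < alpha -> good <->
  (forall j, j \in Flt r s ->
    (alpha%:E < (fine (s j) / (fine (s j) - fine (r j)))%:E)%E).
Proof.
move=> a1; split.
  move=> gd j; rewrite !inE => /andP [/andP [rf sf] lt].
  move: (hr j) (hs j) rf sf lt (gd j).
  case: (r j) => [x| |] //; case: (s j) => [y| |] //.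
  rewrite !lte_fin => x0 y0 _ _ xy /(_ x y erefl erefl) d /=.
  rewrite ?lte_fin ltr_pdivlMr ?subr_gt0 //; nra.
move=> H j x y rj sj.
have x0 : 0 < x by have := hr j; rewrite rj lte_fin.
have y0 : 0 < y by have := hs j; rewrite sj lte_fin.
case: (ltP x y) => xy; last by nra.
have := H j; rewrite !inE rj sj !ltry lte_fin xy /= => /(_ isT).
rewrite ?lte_fin ltr_pdivlMr ?subr_gt0 //; nra.
Qed.

Lemma Flt_lt1 : alpha < 1 -> forall j, j \in Flt r s ->
    (alpha%:E < (fine (s j) / (fine (s j) - fine (r j)))%:E)%E.
Proof.
move=> a1 j; rewrite !inE => /andP [/andP [rf sf] lt].
move: (hr j) (hs j) rf sf lt.
case: (r j) => [x| |] //; case: (s j) => [y| |] //.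
rewrite !lte_fin => x0 y0 _ _ xy /=.
rewrite ?lte_fin ltr_pdivlMr ?subr_gt0 //; nra.
Qed.

End Main.

Theorem theorem3p1 (R : realType) (n : nat) (r s : 'I_n -> \bar R)
    (hr : forall j, (0 < r j)%E) (hs : forall j, (0 < s j)%E)
    (hsupp : diag_supp (thermal r) `<=` diag_supp (thermal s)) :
  (Flt r s = finset.set0 ->
     forall alpha : R, 0 < alpha -> alpha != 1 ->
       (D_thermal alpha r s < +oo)%E) /\
  (Flt r s != finset.set0 ->
     forall alpha : R, 0 < alpha -> alpha != 1 ->
       ((D_thermal alpha r s < +oo)%E <->
        (alpha%:E < \big[Order.min/+oo%E]_(j in Flt r s)
                      ((fine (s j) / (fine (s j) - fine (r j)))%:E))%E)).
Proof.
split.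
  move=> F0 alpha a0 a1; apply/(D_lt_iff hr hs hsupp a0 a1).
  case: (ltgtP alpha 1) => [lt1|gt1|eq1]; last by rewrite eq1 eqxx in a1.
    exact: good_lt1.
  by apply/(good_Flt hr hs gt1) => j; rewrite F0 inE.
move=> Fn alpha a0 a1; rewrite (D_lt_iff hr hs hsupp a0 a1).
case: (ltgtP alpha 1) => [lt1|gt1|eq1]; last by rewrite eq1 eqxx in a1.
  split => _; last exact: good_lt1.
  by apply/bigmin_gtP; split; [exact: ltry | exact: Flt_lt1].
rewrite (good_Flt hr hs gt1); split => [H|/bigmin_gtP [_ H]] //.
by apply/bigmin_gtP; split => //; exact: ltry.
Qed.
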